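(* Let $(G;\gamma_0,\gamma_1,\gamma_2)$ be a regular hypermap, $H=\langle\gamma_1,\gamma_2\rangle$ and $K=\langle\gamma_2,\gamma_0\rangle$. Then the hyperedge-multiplicity of its underlying hypergraph equals the index $\left|\bigcap_{x\in K}KH^x : K\right|$, where $H^x=x^{-1}Hx$.
   Context: A regular hypermap is identified with a triple $(G;\gamma_0,\gamma_1,\gamma_2)$ where $G$ is a finite group generated by three involutions $\gamma_0,\gamma_1,\gamma_2$. Put $H=\langle\gamma_1,\gamma_2\rangle$, $K=\langle\gamma_2,\gamma_0\rangle$. Hypervertices are the right cosets $Hg$, hyperedges the right cosets $Kg$, and a hypervertex and a hyperedge are incident iff the cosets intersect. The hypervertices incident with the hyperedge $K$ are the cosets $Hx$, $x\in K$. The hyperedge-multiplicity is the number of hyperedges $Kg$ that are incident with every hypervertex incident with the hyperedge $K$ (by regularity this is the same for every hyperedge). The underlying hypergraph is called simple if its hyperedge-multiplicity is $1$. Note $\bigcap_{x\in K}KH^x$ is a union of right cosets of $K$. *)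

(* Defs.v *)
From mathcomp Require Import all_boot all_fingroup.
Set Implicit Arguments. Unset Strict Implicit. Unset Printing Implicit Defensive.
Local Open Scope group_scope.

Definition involution (gT : finGroupType) (g : gT) : bool := (g != 1) && (g ^+ 2 == 1).

Definition regular_hypermap (gT : finGroupType) (G : {group gT}) (g0 g1 g2 : gT) : Prop :=
  [/\ involution g0, involution g1, involution g2 & G :=: <<[set g0; g1; g2]>>].

(* Hypervertices: right cosets H g; hyperedges: right cosets K g. *)
Definition hyperedge_multiplicity (gT : finGroupType) (G : {group gT}) (g0 g1 g2 : gT) : nat :=
  let H := <<[set g1; g2]>> in
  let K := <<[set g2; g0]>> in
  #|[set E in rcosets K G | [forall x in K, (H :* x) :&: E != set0]]|.

(* Main.v *)
Require Import Defs.
From mathcomp Require Import all_boot all_fingroup.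
Local Open Scope group_scope.

Lemma cond_lem (gT : finGroupType) (H K : {group gT}) (x g : gT) :
  x \in K -> (H :* x :&: K :* g != set0) = (g \in K * H :^ x).
Proof.
move=> xK; apply/set0Pn/idP.
- case=> y; rewrite inE !mem_rcoset => /andP[yH yK].
  have -> : g = (g * y^-1 * x) * (y * x^-1) ^ x.
    by rewrite /conjg !mulgA mulgK !mulgKV.
  apply: mem_mulg; first by rewrite groupM // -[g * y^-1]invgK invMg invgK groupV.
  by rewrite memJ_conjg.
- case/mulsgP=> k z kK; rewrite mem_conjg => zH ->.
  exists (x * k^-1 * (k * z)); rewrite inE !mem_rcoset; apply/andP; split.
    by rewrite !mulgA mulgKV; rewrite /conjg invgK mulgA in zH.
  by rewrite mulgK groupM // groupV.
Qed.

Theorem mainTheorem2 (gT : finGroupType) (G : {group gT}) (g0 g1 g2 : gT) :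
  regular_hypermap G g0 g1 g2 ->
  let H := <<[set g1; g2]>> in
  let K := <<[set g2; g0]>> in
  hyperedge_multiplicity G g0 g1 g2 = #| \bigcap_(x in K) (K * H :^ x) : K |.
Proof.
case=> _ _ _ defG H K.
rewrite /hyperedge_multiplicity -/H -/K.
set I := \bigcap_(x in K) _.
have HG : H \subset G by rewrite defG genS // subUset !sub1set !inE !eqxx ?orbT.
have KG : K \subset G by rewrite defG genS // subUset !sub1set !inE !eqxx ?orbT.
have IG : I \subset G.
  apply/subsetP=> a /bigcapP aI; have := aI 1 (group1 _).
  rewrite conjsg1; apply/subsetP; exact: mul_subG.
rewrite /indexg; congr #|pred_of_set _|; apply/setP=> E; rewrite inE.
apply/andP/rcosetsP.
- case=> /rcosetsP[g gG ->] /forall_inP Hc; exists g => //.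
  apply/bigcapP=> x xK; have := @cond_lem _ (<<[set g1; g2]>>)%G (<<[set g2; g0]>>)%G x g xK.
  rewrite /= -/H -/K => <-; exact: Hc.
- case=> a aI ->; split; first by apply/rcosetsP; exists a => //; apply: (subsetP IG).
  apply/forall_inP=> x xK; have := @cond_lem _ (<<[set g1; g2]>>)%G (<<[set g2; g0]>>)%G x a xK.
  rewrite /= -/H -/K => ->.
  by move/bigcapP: aI; apply.
Qed.
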